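(* Let $a=a_0+a_1e_1+a_2e_2+a_3e_3\in C\ell_2$ with $a\neq 0$ and $H_a=0$, let $A=\varphi(a)$ and $$M=\varphi\Big(\frac{a'}{4(a_0^2+a_3^2)}\Big)=\frac{1}{4(a_0^2+a_3^2)}\begin{pmatrix} a_0+a_1 & a_2-a_3\\ a_2+a_3 & a_0-a_1\end{pmatrix}.$$ Then $AMA=A$, $MAM=M$, $(AM)^T=AM$ and $(MA)^T=MA$; that is, $M$ is the Moore–Penrose inverse of $\varphi(a)$.
   Context: $C\ell_2$ is the 4-dimensional real associative algebra with basis $1,e_1,e_2,e_3$ and multiplication $e_1^2=e_2^2=1$, $e_3^2=-1$, $e_1e_2=e_3=-e_2e_1$, $e_1e_3=e_2=-e_3e_1$, $e_3e_2=e_1=-e_2e_3$. For $a=a_0+a_1e_1+a_2e_2+a_3e_3$ ($a_i\in\mathbb{R}$): $a'=a_0+a_1e_1+a_2e_2-a_3e_3$, $H_a=a_0^2-a_1^2-a_2^2+a_3^2$, and $\varphi(a)=\begin{pmatrix} a_0+a_1 & a_2+a_3\\ a_2-a_3 & a_0-a_1\end{pmatrix}\in\mathbb{R}^{2\times 2}$. *)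

(* Defs.v *)
(* Cl_2 elements are represented by their four real
   coordinates (a0,a1,a2,a3) w.r.t. the basis 1,e1,e2,e3. *)
From mathcomp Require Import all_boot all_order all_algebra.
Set Implicit Arguments. Unset Strict Implicit. Unset Printing Implicit Defensive.
Import Order.TTheory GRing.Theory Num.Theory.
Local Open Scope ring_scope.

Record Cl2 (R : Type) := mkCl2 { c0 : R; c1 : R; c2 : R; c3 : R }.

Section Cl2ops.
Variable R : comRingType.

Definition cl2_zero : Cl2 R := mkCl2 0 0 0 0.

Definition cl2_scale (k : R) (a : Cl2 R) : Cl2 R :=
  mkCl2 (k * c0 a) (k * c1 a) (k * c2 a) (k * c3 a).

(* Clifford multiplication: e1^2=e2^2=1, e3^2=-1, e1e2=e3=-e2e1,
   e1e3=e2=-e3e1, e3e2=e1=-e2e3. *)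
Definition cl2_mul (a b : Cl2 R) : Cl2 R :=
  mkCl2 (c0 a * c0 b + c1 a * c1 b + c2 a * c2 b - c3 a * c3 b)
        (c0 a * c1 b + c1 a * c0 b - c2 a * c3 b + c3 a * c2 b)
        (c0 a * c2 b + c2 a * c0 b + c1 a * c3 b - c3 a * c1 b)
        (c0 a * c3 b + c3 a * c0 b + c1 a * c2 b - c2 a * c1 b).

Definition cl2_prime (a : Cl2 R) : Cl2 R := mkCl2 (c0 a) (c1 a) (c2 a) (- c3 a).

Definition cl2_H (a : Cl2 R) : R :=
  c0 a ^+ 2 - c1 a ^+ 2 - c2 a ^+ 2 + c3 a ^+ 2.

Definition cl2_phi (a : Cl2 R) : 'M[R]_2 :=
  \matrix_(i < 2, j < 2)
    if i == 0 :> nat then (if j == 0 :> nat then c0 a + c1 a else c2 a + c3 a)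
    else (if j == 0 :> nat then c2 a - c3 a else c0 a - c1 a).
End Cl2ops.

(* Main.v *)
Require Import Defs.
From mathcomp Require Import all_boot all_order all_algebra ring lra.
Import Order.TTheory GRing.Theory Num.Theory.
Local Open Scope ring_scope.

Theorem theorem3p4 (R : realFieldType) (a : Cl2 R) :
  a <> cl2_zero R -> cl2_H a = 0 ->
  let A := cl2_phi a in
  let M := cl2_phi (cl2_scale (4 * (c0 a ^+ 2 + c3 a ^+ 2))^-1 (cl2_prime a)) in
  [/\ A *m M *m A = A, M *m A *m M = M, (A *m M)^T = A *m M & (M *m A)^T = M *m A].
Proof.
case: a => a0 a1 a2 a3 Hnz; rewrite /cl2_H /= => H.
have Hs : 4 * (a0 ^+ 2 + a3 ^+ 2) != 0.
  apply/eqP => Hs; apply: Hnz.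
  have h0 : a0 = 0 by nra.
  have h3 : a3 = 0 by nra.
  have h1 : a1 = 0 by nra.
  have h2 : a2 = 0 by nra.
  by rewrite h0 h1 h2 h3.
set k := (4 * _)^-1.
have hk : k * (4 * (a0 ^+ 2 + a3 ^+ 2)) = 1 by rewrite mulVf.
move: k hk => k hk /=.
have hh : forall x : R, x * (a0 ^+ 2 - a1 ^+ 2 - a2 ^+ 2 + a3 ^+ 2) = 0 by move=> x; rewrite H mulr0.
have hk' : forall x : R, x * (k * (4 * (a0 ^+ 2 + a3 ^+ 2)) - 1) = 0 by move=> x; rewrite hk subrr mulr0.
split; apply/matrixP => i j; rewrite !mxE !big_ord_recr !big_ord0 !mxE /=;
  case: i => [[|[|//]] ?]; case: j => [[|[|//]] ?] /=; rewrite ?mxE ?big_ord_recr ?big_ord0 ?mxE /=.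
all: have := (hh (k*a0), hh (k*a1), hh (k*a2), hh (k*a3), hk' a0, hk' a1, hk' a2, hk' a3);
  have := (hh (k*k*a0), hh (k*k*a1), hh (k*k*a2), hh (k*k*a3), hk' (k*a0), hk' (k*a1), hk' (k*a2), hk' (k*a3)).
all: move=> [[[[[[[e1 e2] e3] e4] e5] e6] e7] e8] [[[[[[[f1 f2] f3] f4] f5] f6] f7] f8].
all: lra.
Qed.
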